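(* Let $\mathcal{T}$ be a finite tree whose vertex set is partitioned into two sets $X$ and $Y$ with $\mathrm{Card}(X),\mathrm{Card}(Y)\ge 2$, every edge joining a vertex of $X$ to a vertex of $Y$; let $E\subseteq X\times Y$ be its set of edges. For $x\in X$, $y\in Y$ let $Y_x=\{y\in Y:(x,y)\in E\}$ and $X_y=\{x\in X:(x,y)\in E\}$. Let $(G,+)$ be an abelian group and $H$ a subgroup of $G$. Suppose $g:X\cup Y\cup E\to G$ satisfies: (1) $g(X\cup Y)\subseteq H$; (2) for all $x\in X$, $g(x)=\sum_{y\in Y_x}g(x,y)$, and for all $y\in Y$, $g(y)=\sum_{x\in X_y}g(x,y)$. Then $g(x,y)\in H$ for all $(x,y)\in E$. *)

(* Defs.v *)
From mathcomp Require Import all_boot all_order all_algebra.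
Set Implicit Arguments. Unset Strict Implicit. Unset Printing Implicit Defensive.
Import GRing.Theory.

Definition bip_adj (X Y : finType) (E : X -> Y -> bool) : rel (X + Y)%type :=
  fun u v => match u, v with
             | inl x, inr y => E x y
             | inr y, inl x => E x y
             | _, _ => false
             end.

Definition bip_connected (X Y : finType) (E : X -> Y -> bool) : Prop :=
  forall u v : (X + Y)%type, connect (bip_adj E) u v.

Definition bip_acyclic (X Y : finType) (E : X -> Y -> bool) : Prop :=
  ~ exists s : seq (X + Y)%type, [/\ 3 <= size s, uniq s & cycle (bip_adj E) s].

Definition bip_tree (X Y : finType) (E : X -> Y -> bool) : Prop :=
  bip_connected E /\ bip_acyclic E.

(* Main.v *)
Require Import Defs.
From mathcomp Require Import all_boot all_order all_algebra.
Import GRing.Theory.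
Local Open Scope ring_scope.

Section Aux.
Variables (X Y : finType) (E : X -> Y -> bool) (x : X) (y : Y).

Definition e' : rel (X + Y)%type := fun u v =>
  bip_adj E u v && ~~ (((u == inl x) && (v == inr y)) || ((u == inr y) && (v == inl x))).

Lemma e'_sym : symmetric e'.
Proof.
move=> [a|b] [c|d] //=; rewrite /e' /= ?orbF; congr (_ && ~~ _); apply: andbC.
Qed.

Lemma bridge : bip_acyclic E -> E x y -> ~~ connect e' (inl x) (inr y).
Proof.
move=> Hac Exy; apply/negP => /connectP [p pp lp].
case: (shortenP pp) lp => p' pp' up' _ lp'.
apply: Hac; exists (inl x :: p'); split => //.
- case: p' pp' up' lp' => [|v1 [|v2 p'']] //=.
  by rewrite andbT => + _ Hv; rewrite -Hv /e' !eqxx /= andbF.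
- rewrite /= rcons_path; apply/andP; split.
  + apply: sub_path pp' => u v /andP [].  by [].
  + by rewrite -lp' /= Exy.
Qed.

Lemma closure a b : E a b -> ~~ ((a == x) && (b == y)) ->
  connect e' (inl x) (inl a) = connect e' (inl x) (inr b).
Proof.
move=> Eab nab.
have h1 : e' (inl a) (inr b).
  rewrite /e' /= Eab /= orbF.
  by apply: contra nab => /andP [/eqP [->] /eqP [->]]; rewrite !eqxx.
have h2 : e' (inr b) (inl a) by rewrite e'_sym.
apply/idP/idP => h; apply: connect_trans h _; exact: connect1.
Qed.

End Aux.

Theorem lemma3p2 (X Y : finType) (E : X -> Y -> bool)
  (G : zmodType) (H : {pred G})
  (gX : X -> G) (gY : Y -> G) (gE : X -> Y -> G) :
  bip_tree E ->
  (2 <= #|X|)%N -> (2 <= #|Y|)%N ->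
  zmod_closed H ->
  (forall x, gX x \in H) -> (forall y, gY y \in H) ->
  (forall x, gX x = \sum_(y | E x y) gE x y) ->
  (forall y, gY y = \sum_(x | E x y) gE x y) ->
  forall x y, E x y -> gE x y \in H.
Proof.
move=> [_ Hac] _ _ Hz HX HY sX sY x y Exy.
have [H0 HB] := Hz.
have [_ HD] := GRing.zmod_closedD Hz.
have Hsum : forall (I : finType) (P : pred I) (F : I -> G),
    (forall i, F i \in H) -> \sum_(i | P i) F i \in H.
  move=> I P F HF; apply: (big_ind (fun v => v \in H)) => //.
pose C := connect (@e' X Y E x y) (inl x).
pose F1 := fun a b => if C (inl a) && E a b then gE a b else 0.
pose F2 := fun a b => if C (inr b) && E a b then gE a b else 0.
have key : forall a b, F1 a b - F2 a b = if (a == x) && (b == y) then gE a b else 0.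
  move=> a b; rewrite /F1 /F2.
  case Eab: (E a b); last first.
    rewrite !andbF subr0; move: Eab; case: eqP => [->|] //; case: eqP => [->|] //; by rewrite Exy.
  rewrite !andbT.
  case: (boolP ((a == x) && (b == y))) => [/andP [/eqP Ea /eqP Eb]|nab].
    by rewrite Ea Eb /C connect0 (negbTE (@bridge _ _ _ _ _ Hac Exy)) subr0.
  by rewrite /C (@closure _ _ _ x y _ _ Eab nab); case: ifP; rewrite subrr.
have eq1 : \sum_(a | C (inl a)) gX a = \sum_a \sum_b F1 a b.
  rewrite big_mkcond; apply: eq_bigr => a _; rewrite sX /F1.
  case: (C (inl a)) => /=; last by rewrite big1.
  by rewrite big_mkcond.
have eq2 : \sum_(b | C (inr b)) gY b = \sum_a \sum_b F2 a b.
  rewrite exchange_big big_mkcond; apply: eq_bigr => b _; rewrite sY /F2.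
  case: (C (inr b)) => /=; last by rewrite big1.
  by rewrite big_mkcond.
have : \sum_(a | C (inl a)) gX a - \sum_(b | C (inr b)) gY b \in H.
  by apply: HB; apply: Hsum.
rewrite eq1 eq2 -sumrB.
under eq_bigr => a _ do rewrite -sumrB.
under eq_bigr => a _ do under eq_bigr => b _ do rewrite key.
have -> : \sum_a \sum_b (if (a == x) && (b == y) then gE a b else 0) = gE x y.
  rewrite (bigD1 x) //= [X in _ + X]big1 => [|a nax]; last first.
    by apply: big1 => b _; rewrite (negbTE nax).
  rewrite addr0 (bigD1 y) //= [X in _ + X]big1 ?eqxx ?addr0 // => b nby.
  by rewrite (negbTE nby) andbF.
by [].
Qed.
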